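(* Every Stackelberg game $(G,L,F)$ admits an SCE and an SCE-PA, i.e. $\mathbf{X}^{SCE}\neq\emptyset$ and $\mathbf{X}^{SCE\text{-}PA}\neq\emptyset$.
   Context: A finite game is $G=(N,\{S_p\}_{p\in N},\{u_p\}_{p\in N})$ with players $N=\{1,\dots,n\}$, finite nonempty strategy sets $S_p$, and utilities $u_p:S\to\mathbb{R}$ on $S=\prod_{p\in N}S_p$; write $s=(s_p,s_{-p})$ with $s_{-p}\in S_{-p}=\prod_{q\neq p}S_q$. $\mathcal{X}=\Delta(S)$ is the set of probability distributions on $S$ and $u_p(x)=\sum_{s\in S}x(s)u_p(s)$ for $x\in\mathcal{X}$. For $P\subseteq N$, $\mathcal{X}^{CE}_P$ is the set of $x\in\mathcal{X}$ such that for every $p\in P$ and all $s_p\neq s_p'\in S_p$: $\sum_{s_{-p}\in S_{-p}} x(s_p,s_{-p})\,(u_p(s_p,s_{-p})-u_p(s_p',s_{-p}))\ge 0$; $\mathcal{X}^{CE}=\mathcal{X}^{CE}_N$ is the set of correlated equilibria of $G$. A Stackelberg game (SG) is a triple $(G,L,F)$ with $L\cup F=N$ and $L\cap F=\emptyset$ (leaders and followers). For $P\subseteq N$, $\Pi_P$ is the set of ordered subsets of $P$ (finite sequences of pairwise distinct elements of $P$, including the empty sequence $\varnothing$); for $\pi\in\Pi_P$ and $p\in P$ not occurring in $\pi$, $\pi p$ is $\pi$ with $p$ appended; when used as a set, $\pi$ means its set of entries. $\mathbf{X}=\prod_{\pi\in\Pi_L}\mathcal{X}^{CE}_{\pi\cup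 F}$, with elements $\mathbf{x}=[x_\pi]_{\pi\in\Pi_L}$. For $\mathbf{x}\in\mathbf{X}$ and $\pi\in\Pi_L$, $x_\pi$ is stable if $u_p(x_\pi)\ge u_p(x_{\pi p})$ for all $p\in L\setminus\pi$; $\mathbf{x}$ is stable if $x_\varnothing$ is stable, and perfectly stable if $x_\pi$ is stable for every $\pi\in\Pi_L$; $\mathbf{X}^{S}$ and $\mathbf{X}^{PS}$ denote the sets of stable and perfectly stable elements of $\mathbf{X}$. For $\mathbf{X}'\subseteq\mathbf{X}$ and $\pi\in\Pi_L$, $\mathcal{P}_{L\setminus\pi}(\mathbf{X}')$ is the set of Pareto optimal elements of $\{x'_\pi:\mathbf{x}'\in\mathbf{X}'\}$ with respect to the objectives $u_p$, $p\in L\setminus\pi$ (an element $y$ of the set is Pareto optimal if no $y'$ in the set satisfies $u_p(y')\ge u_p(y)$ for all $p\in L\setminus\pi$ with strict inequality for some such $p$). $\mathbf{x}\in\mathbf{X}$ is an SCE if $\mathbf{x}\in\mathbf{X}^S$ and $x_\varnothing\in\mathcal{P}_L(\mathbf{X}^S)$; an SCE-PA if $\mathbf{x}\in\mathbf{X}^{PS}$ and $x_\varnothing\in\mathcal{P}_L(\mathbf{X}^{PS})$; an SCE-PAPE if $\mathbf{x}\in\mathbf{X}^{PS}$ and $x_\pi\in\mathcal{P}_{L\setminus\pi}(\mathbf{X}^{PS})$ for every $\pi\in\Pi_L$. The corresponding sets are $\mathbf{X}^{SCE}$, $\mathbf{X}^{SCE\text{-}PA}$, $\mathbf{X}^{SCE\text{-}PAPE}$.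 *)

(* Defs.v *)
From HB Require Import structures.
From mathcomp Require Import all_boot all_order all_algebra.
Set Implicit Arguments. Unset Strict Implicit. Unset Printing Implicit Defensive.
Import Order.TTheory GRing.Theory Num.Theory.
Local Open Scope ring_scope.

Section SG.
Variables (R : realFieldType) (n : nat) (S : 'I_n -> finType).

Definition profile := {dffun forall p : 'I_n, S p}.

Definition dev (s : profile) (p : 'I_n) (b : S p) : profile :=
  [ffun q => dfwith s b q].

Definition distr := {ffun profile -> R}.
Definition is_distr (x : distr) : Prop :=
  (forall s, 0 <= x s) /\ \sum_(s : profile) x s = 1.

Variable u : 'I_n -> profile -> R.

Definition U (p : 'I_n) (x : distr) : R := \sum_(s : profile) x s * u p s.

Definition CE_for (P : {set 'I_n}) (x : distr) : Prop :=
  is_distr x /\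
  forall p, p \in P -> forall a b : S p, a != b ->
    0 <= \sum_(s : profile | s p == a) x s * (u p s - u p (dev s b)).

Variables (L F : {set 'I_n}).

Definition ordsub (pi : seq 'I_n) : bool := uniq pi && all (fun p => p \in L) pi.

(* elements of bold X: families indexed by ordered subsets (values outside
   Pi_L are irrelevant) *)
Definition family := seq 'I_n -> distr.

Definition inX (x : family) : Prop :=
  forall pi, ordsub pi -> CE_for ([set q in pi] :|: F) (x pi).

Definition stable_at (x : family) (pi : seq 'I_n) : Prop :=
  forall p, p \in L -> p \notin pi -> U p (x (rcons pi p)) <= U p (x pi).

Definition XS (x : family) : Prop := inX x /\ stable_at x [::].
Definition XPS (x : family) : Prop :=
  inX x /\ forall pi, ordsub pi -> stable_at x pi.

Definition pareto (Xs : family -> Prop) (pi : seq 'I_n) (y : distr) : Prop :=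
  (exists x', Xs x' /\ x' pi = y) /\
  forall x', Xs x' ->
    ~ ((forall p, p \in L -> p \notin pi -> U p y <= U p (x' pi)) /\
       (exists p, [/\ p \in L, p \notin pi & U p y < U p (x' pi)])).

Definition SCE (x : family) : Prop := XS x /\ pareto XS [::] (x [::]).
Definition SCE_PA (x : family) : Prop := XPS x /\ pareto XPS [::] (x [::]).
Definition SCE_PAPE (x : family) : Prop :=
  XPS x /\ forall pi, ordsub pi -> pareto XPS pi (x pi).

End SG.

(* Main.v *)
Require Import Defs.
From HB Require Import structures.
From mathcomp Require Import all_boot all_order all_algebra.
From mathcomp Require Import ring lra.
From Stdlib Require Import IndefiniteDescription.
Import Order.TTheory GRing.Theory Num.Theory.
Local Open Scope ring_scope.
Section FM.
Variable R : realFieldType.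

Definition delta {K : finType} (k : K) : K -> R := fun k0 => (k == k0)%:R.

Lemma sum_delta (K : finType) k (f : K -> R) : \sum_k0 delta k k0 * f k0 = f k.
Proof.
rewrite (bigD1 k) //= /delta eqxx mul1r big1 ?addr0 // => i /negbTE.
by rewrite eq_sym => ->; rewrite mul0r.
Qed.

Lemma sum_delta2 (K : finType) k1 k2 a b (f : K -> R) :
  \sum_k0 (a * delta k1 k0 + b * delta k2 k0) * f k0 = a * f k1 + b * f k2.
Proof.
rewrite -!sum_delta mulr_sumr [b * _]mulr_sumr -big_split /=.
by apply: eq_bigr => i _; rewrite mulrDl !mulrA.
Qed.

Lemma sum_deltaR (K : finType) k0 (f : K -> R) : \sum_k f k * delta k k0 = f k0.
Proof.
rewrite -(sum_delta _ k0 f); apply: eq_bigr => k _.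
by rewrite mulrC /delta eq_sym.
Qed.

Lemma delta_ge0 (K : finType) (k k0 : K) : 0 <= delta k k0.
Proof. exact: ler0n. Qed.

Lemma fm (m : nat) : forall (K : finType) (c : K -> 'I_m -> R) (e d : K -> R),
  exists N (mu : 'I_N -> K -> R),
   [/\ (forall k' k, 0 <= mu k' k), (forall k' i, \sum_k mu k' k * c k i = 0) &
   forall t, (forall k', \sum_k mu k' k * d k <= (\sum_k mu k' k * e k) * t) ->
     exists v : 'I_m -> R, forall k, d k <= \sum_i c k i * v i + e k * t].
Proof.
elim: m => [|m IH] K c e d.
  exists #|K|, (fun k' => delta (enum_val k')); split.
  - by move=> k' k; apply: delta_ge0.
  - by move=> k' [].
  move=> t H; exists (fun _ => 0) => k; rewrite big_ord0 add0r.
  by have := H (enum_rank k); rewrite !sum_delta enum_rankK.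
pose g k := c k ord_max.
pose mus (k'' : K + (K * K)) : K -> R :=
  match k'' with
  | inl k => if g k == 0 then delta k else fun _ => 0
  | inr (k, l) => if (0 < g k) && (g l < 0) then
                    fun k0 => - g l * delta k k0 + g k * delta l k0
                  else fun _ => 0
  end.
pose c'' k'' (j : 'I_m) := \sum_k mus k'' k * c k (widen_ord (leqnSn m) j).
pose e'' k'' := \sum_k mus k'' k * e k.
pose d'' k'' := \sum_k mus k'' k * d k.
have [N [mu'' [mu0 muc mut]]] := IH _ c'' e'' d''.
have mus0 k'' k1 : 0 <= mus k'' k1.
  case: k'' => [k|[k l]] /=; first by case: ifP => _ //; apply: delta_ge0.
  case: ifP => // /andP[gk gl]; apply: addr_ge0; apply: mulr_ge0;
    rewrite ?delta_ge0 ?oppr_ge0 ?ltW //.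
have musg k'' : \sum_k mus k'' k * g k = 0.
  case: k'' => [k|[k l]] /=.
    case: ifP => [/eqP gk0|_]; first by rewrite sum_delta.
    by rewrite big1 // => i _; rewrite mul0r.
  case: ifP => _; first by rewrite sum_delta2; ring.
  by rewrite big1 // => i _; rewrite mul0r.
have exch (f : K -> R) k' : \sum_k (\sum_k'' mu'' k' k'' * mus k'' k) * f k =
    \sum_k'' mu'' k' k'' * (\sum_k mus k'' k * f k).
  rewrite (eq_bigr (fun k => \sum_k'' mu'' k' k'' * mus k'' k * f k)); last first.
    by move=> k _; rewrite mulr_suml.
  rewrite exchange_big /=; apply: eq_bigr => k'' _; rewrite mulr_sumr.
  by apply: eq_bigr => k _; rewrite mulrA.
exists N, (fun k' k => \sum_k'' mu'' k' k'' * mus k'' k); split.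
- by move=> k' k; apply: sumr_ge0 => k'' _; apply: mulr_ge0.
- move=> k' i; rewrite exch.
  case: (unliftP ord_max i) => [j ->|->].
    have -> : lift ord_max j = widen_ord (leqnSn m) j by apply: val_inj; exact: lift_max.
    exact: muc.
  by rewrite big1 // => k'' _; rewrite musg mulr0.
move=> t H.
have H'' k' : \sum_k'' mu'' k' k'' * d'' k'' <= (\sum_k'' mu'' k' k'' * e'' k'') * t.
  by have := H k'; rewrite !exch.
have [w Hw] := mut t H''.
pose r k := \sum_j c k (widen_ord (leqnSn m) j) * w j + e k * t.
have Hr k'' : \sum_k mus k'' k * d k <= \sum_k mus k'' k * r k.
  have := Hw k''; rewrite /d'' /c'' /e''.
  suff -> : \sum_k mus k'' k * r k = \sum_i (\sum_k mus k'' k * c k (widen_ord (leqnSn m) i)) * w i +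
     (\sum_k mus k'' k * e k) * t by [].
  rewrite /r (eq_bigr (fun k => \sum_j mus k'' k * c k (widen_ord (leqnSn m) j) * w j
        + mus k'' k * e k * t)); last first.
    by move=> k _; rewrite mulrDr mulr_sumr mulrA; congr (_ + _); apply: eq_bigr => j _; rewrite mulrA.
  rewrite big_split /= exchange_big /= mulr_suml; congr (_ + _).
  by apply: eq_bigr => j _; rewrite mulr_suml.
pose lb k := (d k - r k) / g k.
pose ub l := (d l - r l) / g l.
pose z0 := \big[Order.max/0]_(l | g l < 0) ub l.
pose z1 := \big[Order.min/0]_(l | g l < 0) ub l.
pose z := \big[Order.max/z1]_(k | 0 < g k) lb k.
exists (fun i => oapp w z (unlift ord_max i)) => k.
rewrite big_ord_recr /= unlift_none /=.
have -> : \sum_(i < m) c k (widen_ord (leqnSn m) i) * oapp w z (unlift ord_max (widen_ord (leqnSn m) i))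
   = \sum_(i < m) c k (widen_ord (leqnSn m) i) * w i.
  apply: eq_bigr => j _.
  have -> : widen_ord (leqnSn m) j = lift ord_max j by apply: val_inj; rewrite /=; symmetry; exact: lift_max.
  by rewrite liftK.
rewrite -addrA [_ * z + _]addrC addrA -/(r k) -/(g k).
case: (ltrgtP (g k) 0) => gk.
- have : z <= ub k.
    apply: bigmax_le; first exact: bigmin_le_cond.
    move=> k1 gk1; have := Hr (inr (k1, k)); rewrite /= gk1 gk /= !sum_delta2 => h.
    rewrite /lb /ub ler_pdivrMr // mulrAC ler_ndivlMr //; lra.
  by rewrite /ub ler_ndivlMr // => h; lra.
- have : lb k <= z by apply: le_bigmax_cond.
  by rewrite /lb ler_pdivrMr // => h; lra.
- have := Hr (inl k); rewrite /= gk eqxx !sum_delta => h.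
  by rewrite mul0r addr0.
Qed.


Lemma fm_sound (m : nat) (K : finType) (c : K -> 'I_m -> R) (e d : K -> R)
  (mu : K -> R) : (forall k, 0 <= mu k) -> (forall i, \sum_k mu k * c k i = 0) ->
  forall t (v : 'I_m -> R), (forall k, d k <= \sum_i c k i * v i + e k * t) ->
  \sum_k mu k * d k <= (\sum_k mu k * e k) * t.
Proof.
move=> mu0 muc t v hv.
have E : \sum_k mu k * (\sum_i c k i * v i + e k * t) = (\sum_k mu k * e k) * t.
  rewrite mulr_suml (eq_bigr (fun k => \sum_i mu k * c k i * v i + mu k * e k * t)); last first.
    by move=> k _; rewrite mulrDr mulr_sumr mulrA; congr (_ + _); apply: eq_bigr => i _; rewrite mulrA.
  rewrite big_split /= exchange_big /= big1 ?add0r // => i _.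
  by rewrite -mulr_suml muc mul0r.
rewrite -E.
by apply: ler_sum => k _; apply: ler_wpM2l.
Qed.

Lemma sum_enum (V : finType) (F : V -> R) : \sum_x F x = \sum_(i < #|V|) F (enum_val i).
Proof. by rewrite -big_enum_val. Qed.

Lemma farkas (V K : finType) (c : K -> V -> R) (d : K -> R) :
  (exists v : V -> R, forall k, d k <= \sum_x c k x * v x) \/
  (exists y : K -> R, [/\ forall k, 0 <= y k, forall x, \sum_k y k * c k x = 0
      & 0 < \sum_k y k * d k]).
Proof.
pose c' k (i : 'I_#|V|) := c k (enum_val i).
have [N [mu [mu0 muc mut]]] := fm _ _ c' (fun _ => 0) d.
have [/forallP H|/forallPn [k' Hk']] := boolP [forall k', \sum_k mu k' k * d k <= 0].
  left; have [|v hv] := mut 0; first by move=> k'; rewrite mulr0; apply: H.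
  exists (fun x => v (enum_rank x)) => k; rewrite sum_enum.
  by under eq_bigr do rewrite enum_valK; have := hv k; rewrite mulr0 addr0.
right; exists (mu k'); split => //.
  by move=> x; rewrite -(enum_rankK x); apply: muc.
by rewrite ltNge.
Qed.

Lemma lp_max (V K : finType) (c : K -> V -> R) (d : K -> R) (f : V -> R) :
  let feas v := forall k, d k <= \sum_x c k x * v x in
  (exists v, feas v) -> (exists M, forall v, feas v -> \sum_x f x * v x <= M) ->
  exists v, feas v /\ forall v', feas v' -> \sum_x f x * v' x <= \sum_x f x * v x.
Proof.
move=> feas [v0 fv0] [M hM].
pose c2 (k : K + unit) (i : 'I_#|V|) := match k with inl k => c k (enum_val i) | inr _ => f (enum_val i) end.
pose e2 (k : K + unit) : R := match k with inl _ => 0 | inr _ => -1 end.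
pose d2 (k : K + unit) : R := match k with inl k => d k | inr _ => 0 end.
have [N [mu [mu0 muc mut]]] := fm _ _ c2 e2 d2.
pose al k' := \sum_k mu k' k * e2 k.
pose be k' := \sum_k mu k' k * d2 k.
pose Fv (v : V -> R) := \sum_x f x * v x.
have clA v t : feas v -> t <= Fv v -> forall k', be k' <= al k' * t.
  move=> fv tle k'; apply: (@fm_sound _ _ c2 e2 d2 (mu k') (mu0 k') (muc k') t (fun i => v (enum_val i))).  
  case=> [k|[]] /=; first by rewrite mul0r addr0 -(sum_enum _ (fun x => c k x * v x)); apply: fv.
  by rewrite -(sum_enum _ (fun x => f x * v x)); move: tle; rewrite /Fv; lra.
have clB t : (forall k', be k' <= al k' * t) -> exists v, feas v /\ t <= Fv v.
  move=> H; have [v hv] := mut t H; exists (fun x => v (enum_rank x)); split.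
    move=> k; rewrite sum_enum; under eq_bigr do rewrite enum_valK.
    by have := hv (inl k); rewrite /= mul0r addr0.
  rewrite /Fv sum_enum; under eq_bigr do rewrite enum_valK.
  have := hv (inr tt); rewrite /=; lra.
have [k0 hk0] : exists k0, al k0 < 0.
  have [/forallP H|/forallPn [k' Hk']] := boolP [forall k', 0 <= al k'].
    pose t := Num.max (Fv v0) (M + 1).
    have : forall k', be k' <= al k' * t.
      move=> k'; apply: le_trans (clA v0 (Fv v0) fv0 (lexx _) k') _.
      by apply: ler_wpM2l; [apply: H | rewrite /t le_max lexx].
    move=> /clB [v [fv tle]]; have := hM v fv.
    have : M + 1 <= t by rewrite /t le_max lexx orbT.
    rewrite /Fv in tle; lra.
  by exists k'; rewrite ltNge.
pose ts := \big[Order.min/(be k0 / al k0)]_(k' | al k' < 0) (be k' / al k').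
have tsF k' : al k' < 0 -> be k' <= al k' * ts.
  move=> hk; have : ts <= be k' / al k' by apply: bigmin_le_cond.
  by rewrite ler_ndivlMr // mulrC.
have ub v : feas v -> Fv v <= ts.
  move=> fv; apply: le_bigmin => [|k' hk]; rewrite ler_ndivlMr // mulrC;
  exact: clA fv (lexx _) _.
have : forall k', be k' <= al k' * ts.
  move=> k'; case: (ltrgtP (al k') 0) => hk; first exact: tsF.
    apply: le_trans (clA v0 (Fv v0) fv0 (lexx _) k') _.
    by apply: ler_wpM2l; [apply: ltW | apply: ub].
  by have := clA v0 (Fv v0) fv0 (lexx _) k'; rewrite hk !mul0r.
move=> /clB [v [fv tle]]; exists v; split => // v' fv'.
exact: le_trans (ub v' fv') tle.
Qed.


Lemma argmin_ex (T : finType) (t0 : T) (w : T -> R) : exists x, forall a, w x <= w a.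
Proof. by case: (@arg_minP _ _ T t0 predT w) => // x _ H; exists x => a; apply: H. Qed.

Lemma stationary (T : finType) (t0 : T) (lam : T -> T -> R) :
  (forall a b, 0 <= lam a b) ->
  exists sg : T -> R, [/\ forall a, 0 <= sg a, \sum_a sg a = 1 &
    forall a, \sum_b sg b * lam b a = sg a * \sum_b lam a b].
Proof.
move=> lam0.
pose Lam a := \sum_b lam a b.
pose c (k : T + (bool + T)) (x : T) : R := match k with
  | inl a => delta a x
  | inr (inl true) => 1
  | inr (inl false) => -1
  | inr (inr a) => lam x a - delta a x * Lam a end.
pose d (k : T + (bool + T)) : R := match k with
  | inr (inl true) => 1
  | inr (inl false) => -1
  | _ => 0 end.
have [[v hv]|[y [y0 yc yd]]] := farkas _ _ c d.
  have v0 a : 0 <= v a by have := hv (inl a); rewrite /= sum_delta.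
  have v1 : \sum_a v a = 1.
    have h1 := hv (inr (inl true)); have h2 := hv (inr (inl false)).
    have e1 : \sum_x c (inr (inl true)) x * v x = \sum_x v x.
      by apply: eq_bigr => x _; rewrite /= mul1r.
    have e2 : \sum_x c (inr (inl false)) x * v x = - \sum_x v x.
      by rewrite -sumrN; apply: eq_bigr => x _; rewrite /= mulN1r.
    rewrite e1 in h1; rewrite e2 in h2; move: h1 h2; rewrite /d /=; lra.
  pose q a := \sum_x c (inr (inr a)) x * v x.
  have q0 a : 0 <= q a by have := hv (inr (inr a)).
  have qE a : q a = \sum_b v b * lam b a - v a * Lam a.
    rewrite /q (eq_bigr (fun x => v x * lam x a - Lam a * (delta a x * v x))); last first.
      by move=> x _; rewrite /= mulrBl [lam x a * _]mulrC; congr (_ - _); rewrite mulrAC mulrC.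
    by rewrite sumrB -mulr_sumr sum_delta mulrC.
  have qs : \sum_a q a = 0.
    under eq_bigr do rewrite qE. rewrite sumrB.
    rewrite exchange_big /=.
    rewrite (eq_bigr (fun b => v b * Lam b)) ?subrr // => b _.
    by rewrite /Lam mulr_sumr.
  exists v; split => // a; apply/eqP; rewrite -subr_eq0 -qE.
  by rewrite (@psumr_eq0P _ _ predT q (fun a _ => q0 a) qs a)...
exfalso.
pose w a := y (inr (inr a)).
have [x0 hx0] := argmin_ex _ t0 w.
have := yc x0; rewrite big_sumType /= big_sumType /= big_bool /= sum_deltaR => hc.
have := yd; rewrite big_sumType /= big_sumType /= big_bool /= big1; last by move=> a _; rewrite mulr0.
rewrite big1; last by move=> a _; rewrite mulr0.
rewrite !add0r !addr0 => ypos.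
have key : 0 <= \sum_i w i * (lam x0 i - delta i x0 * Lam i).
  have -> : \sum_i w i * (lam x0 i - delta i x0 * Lam i) = \sum_i lam x0 i * (w i - w x0).
    rewrite (eq_bigr (fun i => w i * lam x0 i - Lam x0 * (w i * delta i x0))); last first.
      move=> i _; rewrite mulrBr; congr (_ - _); rewrite /delta.
      case: eqP => [->|_]; rewrite ?mulr1 ?mul1r ?mul0r ?mulr0 //.
      by rewrite mulrC.
    rewrite sumrB -mulr_sumr sum_deltaR /Lam mulr_suml -sumrB.
    by apply: eq_bigr => i _; rewrite mulrBr mulrC.
  by apply: sumr_ge0 => i _; apply: mulr_ge0 => //; rewrite subr_ge0.
have := y0 (inl x0).
move: hc ypos key; rewrite /w; lra.
Qed.

End FM.
Lemma big_sigT (R : nmodType) (I : finType) (T_ : I -> finType) (F : {i : I & T_ i} -> R) :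
  \sum_(t : {i : I & T_ i}) F t = \sum_(i : I) \sum_(x : T_ i) F (Tagged T_ x).
Proof.
rewrite ![index_enum _]unlock [@Finite.enum in LHS]unlock /= /tag_enum.
rewrite big_flatten /= big_map; apply: eq_bigr => i _.
by rewrite big_map -enumT /= ?big_enum.
Qed.

Section CE.
Variables (R : realFieldType) (n : nat) (S : 'I_n -> finType).
Hypothesis hS : forall p, (0 < #|S p|)%N.
Variable u : 'I_n -> profile S -> R.

Lemma dev_at (s : profile S) p (b : S p) : dev s b p = b.
Proof. by rewrite /dev ffunE dfwith_in. Qed.

Lemma dev_out (s : profile S) p (b : S p) q : p != q -> dev s b q = s q.
Proof. by move=> hpq; rewrite /dev ffunE dfwith_out. Qed.

Lemma devdev (s : profile S) p (a b : S p) : dev (dev s b) a = dev s a.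
Proof.
apply/ffunP => q; rewrite /dev !ffunE.
case: (eqVneq p q) => [<-|hpq]; first by rewrite !dfwith_in.
by rewrite !dfwith_out // ffunE dfwith_out.
Qed.

Lemma dev_eq (s : profile S) p (a : S p) : (dev s a == s) = (s p == a).
Proof.
apply/eqP/eqP => [<-|hs]; first by rewrite dev_at.
apply/ffunP => q; rewrite /dev ffunE.
case: (eqVneq p q) => [<-|hpq]; first by rewrite dfwith_in.
by rewrite dfwith_out.
Qed.

Lemma devK (s : profile S) p (a : S p) : s p = a -> dev s a = s.
Proof. by move=> h; apply/eqP; rewrite dev_eq h. Qed.


Lemma stat_cancel (T : finType) (lam : T -> T -> R) (sg G : T -> R) :
  (forall a, \sum_b sg b * lam b a = sg a * \sum_b lam a b) ->
  \sum_a \sum_b lam a b * (sg a * (G a - G b)) = 0.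
Proof.
move=> st.
rewrite (eq_bigr (fun a => sg a * (\sum_b lam a b) * G a - \sum_b sg a * lam a b * G b)); last first.
  move=> a _; rewrite mulr_sumr mulr_suml -sumrB; apply: eq_bigr => b _; ring.
rewrite sumrB exchange_big /=.
rewrite [X in _ - X](eq_bigr (fun b => sg b * (\sum_a lam b a) * G b)) ?subrr // => b _.
by rewrite -mulr_suml st.
Qed.

Definition dflt p : S p := enum_val (Ordinal (hS p)).

Lemma ce_exists : exists x : distr R S, CE_for u [set: 'I_n] x.
Proof.
pose T := {p : 'I_n & (S p * S p)%type}.
pose A (t : T) (s : profile S) : R := if s (tag t) == (tagged t).1
   then u (tag t) s - u (tag t) (dev s (tagged t).2) else 0.
pose c (k : profile S + (bool + T)) (x : profile S) : R := match k with
  | inl s => @delta R _ s x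
  | inr (inl true) => 1
  | inr (inl false) => -1
  | inr (inr t) => A t x end.
pose d (k : profile S + (bool + T)) : R := match k with
  | inr (inl true) => 1
  | inr (inl false) => -1
  | _ => 0 end.
have [[v hv]|[y [y0 yc yd]]] := farkas _ _ _ c d.
  exists [ffun s => v s]; split; first split.
  - by move=> s; rewrite ffunE; have := hv (inl s); rewrite /= sum_delta.
  - have h1 := hv (inr (inl true)); have h2 := hv (inr (inl false)).
    have e1 : \sum_x c (inr (inl true)) x * v x = \sum_x [ffun s => v s] x.
      by apply: eq_bigr => x _; rewrite /= mul1r ffunE.
    have e2 : \sum_x c (inr (inl false)) x * v x = - \sum_x [ffun s => v s] x.
      by rewrite -sumrN; apply: eq_bigr => x _; rewrite /= mulN1r ffunE.
    rewrite e1 in h1; rewrite e2 in h2; move: h1 h2; rewrite /d /=; lra.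
  move=> p _ a b hab.
  have := hv (inr (inr (Tagged (fun p => (S p * S p)%type) (a, b)))).
  move=> h; apply: le_trans h _; rewrite le_eqVlt; apply/orP; left; apply/eqP; rewrite [RHS]big_mkcond /=.
  by apply: eq_bigr => s _; rewrite /A /= ffunE; case: ifP; rewrite ?mul0r // mulrC.
exfalso.
pose lam p (a b : S p) := y (inr (inr (Tagged (fun p => (S p * S p)%type) (a, b)))).
have hsg p : exists sg : S p -> R, [/\ forall a, 0 <= sg a, \sum_a sg a = 1 &
    forall a, \sum_b sg b * lam p b a = sg a * \sum_b lam p a b].
  exact: (stationary _ _ (dflt p) (lam p) (fun a b => y0 _)).
pose sg p := proj1_sig (constructive_indefinite_description _ (hsg p)).
have sgP p : [/\ forall a, 0 <= sg p a, \sum_a sg p a = 1 &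
    forall a, \sum_b sg p b * lam p b a = sg p a * \sum_b lam p a b].
  exact: (proj2_sig (constructive_indefinite_description _ (hsg p))).
pose x (s : profile S) := \prod_p sg p (s p).
pose C s := \sum_t y (inr (inr t)) * A t s.
have Cneg s : C s < 0.
  have := yc s; rewrite big_sumType /= big_sumType /= big_bool /= sum_deltaR => hc.
  have := yd; rewrite big_sumType /= big_sumType /= big_bool /= big1; last by move=> a _; rewrite mulr0.
  rewrite big1; last by move=> a _; rewrite mulr0.
  rewrite !add0r !addr0 => ypos.
  have hC : \sum_i y (inr (inr i)) * c (inr (inr i)) s = C s by [].
  have := y0 (inl s); move: hc ypos; rewrite hC; lra.
have xge0 s : 0 <= x s by apply: prodr_ge0 => p _; case: (sgP p).
have [sp hsp] : exists s, 0 < x s.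
  have hp p : exists a, 0 < sg p a.
    have [/existsP //|/existsPn H] := boolP [exists a, 0 < sg p a].
    case: (sgP p) => _ s1 _; have : \sum_a sg p a <= \sum_(a : S p) (0 : R).
      by apply: ler_sum => a _; move: (H a); rewrite -leNgt.
    by rewrite s1 big1 // ler10.
  exists [ffun p => xchoose (hp p)]; apply: prodr_gt0 => p _; rewrite ffunE.
  exact: (xchooseP (hp p)).
have hneg : \sum_s x s * C s < 0.
  rewrite (bigD1 sp) //=.
  have : \sum_(s | s != sp) x s * C s <= 0.
    rewrite -oppr_ge0 -sumrN; apply: sumr_ge0 => s _; rewrite oppr_ge0.
    by apply: mulr_ge0_le0 => //; apply: ltW.
  have : x sp * C sp < 0 by rewrite pmulr_rlt0.
  lra.
suff : \sum_s x s * C s = 0 by move=> h; move: hneg; rewrite h ltxx.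
have E1 : \sum_s x s * C s = \sum_t y (inr (inr t)) * \sum_s x s * A t s.
  rewrite /C; under eq_bigr do rewrite mulr_sumr.
  rewrite exchange_big /=; apply: eq_bigr => t _; rewrite mulr_sumr.
  by apply: eq_bigr => s _; rewrite mulrCA.
rewrite E1 big_sigT big1 // => p _.
pose w s := \prod_(q | q != p) sg q (s q).
have xw s : x s = sg p (s p) * w s by rewrite /x (bigD1 p).
pose G (a : S p) := \sum_(s : profile S | s p == a) w s * u p s.
have reidx (a b : S p) : \sum_(s : profile S | s p == a) w s * u p (dev s b) = G b.
  rewrite /G (reindex_onto (fun j => dev j a) (fun i => dev i b)) /=; last first.
    by move=> i /eqP hi; rewrite devdev devK.
  apply: eq_big => [j|j /andP[_ /eqP hj]]; first by rewrite dev_at eqxx devdev dev_eq.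
  rewrite devdev in hj; rewrite devdev hj; congr (_ * _); apply: eq_bigr => q hq; rewrite dev_out // eq_sym.
  by move: hq; rewrite /=.
have hA (a b : S p) : \sum_s x s * A (Tagged (fun p => (S p * S p)%type) (a, b)) s
     = sg p a * (G a - G b).
  rewrite (eq_bigr (fun s : profile S => if s p == a then x s * (u p s - u p (dev s b)) else 0)); last first.
    by move=> s _; rewrite /A /=; case: ifP; rewrite ?mulr0.
  rewrite -big_mkcond /= -(reidx a b) /G mulrBr !mulr_sumr -sumrB.
  apply: eq_bigr => s /eqP hs; rewrite xw hs; ring.
rewrite (eq_bigr (fun ab => lam p ab.1 ab.2 * (sg p ab.1 * (G ab.1 - G ab.2)))); last first.
  by case=> a b _; rewrite hA.
rewrite -(pair_big predT predT (fun a b => lam p a b * (sg p a * (G a - G b)))) /=.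
by case: (sgP p) => _ _ st; apply: stat_cancel.
Qed.

End CE.
Section Enc.
Variables (R : realFieldType) (n : nat) (S : 'I_n -> finType).
Hypothesis hS : forall p, (0 < #|S p|)%N.
Variable u : 'I_n -> profile S -> R.
Variables (L F : {set 'I_n}).

Fixpoint seqs (k : nat) : seq (seq 'I_n) :=
  if k is k'.+1 then [::] :: [seq i :: s | i <- enum 'I_n, s <- seqs k'] else [:: [::]].

Lemma mem_seqs k (s : seq 'I_n) : (size s <= k)%N -> s \in seqs k.
Proof.
elim: k s => [|k IH] [|i s] //= hs; rewrite inE; apply/orP; right.
by apply: (allpairs_f (fun i s => i :: s)); rewrite ?mem_enum // IH.
Qed.

Definition allseq := seqs n.

Lemma ordsub_mem pi : ordsub L pi -> pi \in allseq.
Proof.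
case/andP => hu _; apply: mem_seqs.
by rewrite -(card_uniqP hu); apply: leq_trans (max_card _) _; rewrite card_ord.
Qed.

Lemma nil_mem : [::] \in allseq.
Proof. exact: mem_seqs. Qed.

Definition Idx := seq_sub allseq.
Definition i0 : Idx := SeqSub nil_mem.
Definition idx (pi : seq 'I_n) : Idx := insubd i0 pi.

Lemma idxK pi : pi \in allseq -> val (idx pi) = pi.
Proof. exact: insubdK. Qed.


Definition T := {p : 'I_n & (S p * S p)%type}.
Definition Arow (t : T) (s : profile S) : R := if s (tag t) == (tagged t).1
   then u (tag t) s - u (tag t) (dev s (tagged t).2) else 0.
Definition V := (Idx * profile S)%type.
Definition Comp := (profile S + (bool + (T + 'I_n)))%type.
Definition K := (Idx * Comp)%type.

Variable Q : pred (seq 'I_n).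

Definition guard (k : K) : bool := ordsub L (val k.1) &&
  match k.2 with
  | inl _ => true
  | inr (inl _) => true
  | inr (inr (inl t)) => (tag t \in [set q in val k.1] :|: F) && ((tagged t).1 != (tagged t).2)
  | inr (inr (inr p)) => [&& Q (val k.1), p \in L & p \notin val k.1]
  end.

Definition c0 (k : K) (x : V) : R :=
  match k.2 with
  | inl s0 => delta R k.1 x.1 * delta R s0 x.2
  | inr (inl true) => delta R k.1 x.1 * 1
  | inr (inl false) => delta R k.1 x.1 * (-1)
  | inr (inr (inl t)) => delta R k.1 x.1 * Arow t x.2
  | inr (inr (inr p)) => delta R k.1 x.1 * u p x.2 - delta R (idx (rcons (val k.1) p)) x.1 * u p x.2
  end.

Definition d0 (k : K) : R :=
  match k.2 with
  | inr (inl true) => 1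
  | inr (inl false) => -1
  | _ => 0
  end.

Definition cc k x := if guard k then c0 k x else 0.
Definition dd k := if guard k then d0 k else 0.
Definition feas (v : V -> R) := forall k, dd k <= \sum_x cc k x * v x.

Definition fam (v : V -> R) : Defs.family R S := fun pi => [ffun s => v (idx pi, s)].
Definition enc (x : Defs.family R S) : V -> R := fun js => x (val js.1) js.2.

Lemma sum_pd (i : Idx) (g : profile S -> R) (v : V -> R) :
  \sum_(x : V) (delta R i x.1 * g x.2) * v x = \sum_s g s * v (i, s).
Proof.
rewrite (eq_bigr (fun x => (fun j s => delta R i j * g s * v (j, s)) x.1 x.2)); last by case.
rewrite -(pair_big predT predT (fun j s => delta R i j * g s * v (j, s))) /=.
rewrite (eq_bigr (fun j => delta R i j * \sum_s g s * v (j, s))); first exact: sum_delta.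
by move=> j _; rewrite mulr_sumr; apply: eq_bigr => s _; rewrite mulrA.
Qed.

Lemma feasE v k : guard k -> dd k <= \sum_x cc k x * v x -> d0 k <= \sum_x c0 k x * v x.
Proof. by rewrite /dd /cc => ->. Qed.

Lemma feasI v k : (guard k -> d0 k <= \sum_x c0 k x * v x) -> dd k <= \sum_x cc k x * v x.
Proof.
rewrite /dd /cc; case: (guard k) => [h|_]; first exact: h.
by rewrite big1 // => x _; rewrite mul0r.
Qed.

Lemma rs_nonneg i s0 v : \sum_x c0 (i, inl s0) x * v x = v (i, s0).
Proof. by rewrite /c0 /= sum_pd sum_delta. Qed.

Lemma rs_one i v : \sum_x c0 (i, inr (inl true)) x * v x = \sum_s v (i, s).
Proof. by rewrite /c0 /= (sum_pd i (fun _ => 1)) /=; under eq_bigr do rewrite mul1r. Qed.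

Lemma rs_mone i v : \sum_x c0 (i, inr (inl false)) x * v x = - \sum_s v (i, s).
Proof. by rewrite /c0 /= (sum_pd i (fun _ => -1)) /= -sumrN; under eq_bigr do rewrite mulN1r. Qed.

Lemma rs_ce i t v : \sum_x c0 (i, inr (inr (inl t))) x * v x = \sum_s Arow t s * v (i, s).
Proof. by rewrite /c0 /= sum_pd. Qed.

Lemma rs_st i p v : \sum_x c0 (i, inr (inr (inr p))) x * v x =
  \sum_s u p s * v (i, s) - \sum_s u p s * v (idx (rcons (val i) p), s).
Proof.
rewrite /c0 /=; under eq_bigr do rewrite mulrBl.
by rewrite sumrB !sum_pd.
Qed.


Definition XQ (x : Defs.family R S) :=
  inX u L F x /\ forall pi, ordsub L pi -> Q pi -> stable_at u L x pi.

Lemma ordsub_rcons pi p : ordsub L pi -> p \in L -> p \notin pi -> ordsub L (rcons pi p).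
Proof.
rewrite /ordsub rcons_uniq all_rcons => /andP[hu ha] hp hnp.
by rewrite hnp hu hp ha.
Qed.

Lemma E1 v : feas v -> XQ (fam v).
Proof.
move=> hv; split.
  move=> pi hpi; have vi : val (idx pi) = pi by apply: idxK; apply: ordsub_mem.
  split; first split.
  - move=> s; rewrite ffunE.
    have := @feasE v (idx pi, inl s) ^~ (hv _).
    by rewrite /guard /= vi hpi rs_nonneg /=; apply.
  - have h1 := @feasE v (idx pi, inr (inl true)) ^~ (hv _).
    have h2 := @feasE v (idx pi, inr (inl false)) ^~ (hv _).
    rewrite /guard /= vi hpi in h1 h2.
    have := h1 isT; have := h2 isT; rewrite rs_one rs_mone /d0 /=.
    under [\sum_s [ffun s0 => _] s]eq_bigr do rewrite ffunE.
    lra.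
  move=> p hp a b hab.
  have := @feasE v (idx pi, inr (inr (inl (Tagged (fun p => (S p * S p)%type) (a, b))))) ^~ (hv _).
  rewrite /guard /= vi hpi hp hab rs_ce /d0 /= => /(_ isT) h.
  apply: le_trans h _; rewrite le_eqVlt; apply/orP; left; apply/eqP; rewrite [RHS]big_mkcond /=.
  by apply: eq_bigr => s _; rewrite /Arow /= ffunE; case: ifP; rewrite ?mul0r // mulrC.
move=> pi hpi hQ p hp hnp; have vi : val (idx pi) = pi by apply: idxK; apply: ordsub_mem.
have := @feasE v (idx pi, inr (inr (inr p))) ^~ (hv _).
rewrite /guard /= vi hpi hQ hp hnp rs_st /d0 /= vi => /(_ isT).
rewrite /U subr_ge0.
have e (pi' : seq 'I_n) : \sum_s fam v pi' s * u p s = \sum_s u p s * v (idx pi', s).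
  by apply: eq_bigr => s _; rewrite ffunE mulrC.
by rewrite !e.
Qed.

Lemma fam_enc x pi : pi \in allseq -> fam (enc x) pi = x pi.
Proof. by move=> hm; apply/ffunP => s; rewrite ffunE /enc /= idxK. Qed.

Lemma E2 x : XQ x -> feas (enc x).
Proof.
move=> [hin hst] [i cp]; apply: feasI; rewrite /guard /=; case/andP => hpi hg.
have [[h0 h1] hce] := hin _ hpi.
case: cp hg => [s0|[[|]|[t|p]]] hg.
- by rewrite rs_nonneg; apply: h0.
- by rewrite rs_one; rewrite /enc /= h1.
- by rewrite rs_mone /enc /= h1.
- case: t hg => p [a b] /= /andP[hp hab]; rewrite rs_ce /d0 /=.
  have := hce p hp a b hab; move=> h; apply: le_trans h _.
  rewrite le_eqVlt; apply/orP; left; apply/eqP; rewrite [LHS]big_mkcond /=.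
  by apply: eq_bigr => s _; rewrite /Arow /enc /=; case: ifP; rewrite ?mul0r // mulrC.
- case/and3P: hg => hQ hp hnp; rewrite rs_st /d0 /= subr_ge0.
  have hr := ordsub_mem _ (ordsub_rcons _ _ hpi hp hnp).
  have := hst _ hpi hQ p hp hnp; rewrite /U /enc /= idxK //.
  have e (y : distr R S) : \sum_s y s * u p s = \sum_s u p s * y s.
    by apply: eq_bigr => s _; rewrite mulrC.
  by rewrite !e.
Qed.

Definition fobj (x : V) : R := delta R (idx [::]) x.1 * \sum_(p in L) u p x.2.

Lemma obj_fam v : \sum_x fobj x * v x = \sum_(p in L) U u p (fam v [::]).
Proof.
rewrite /fobj (sum_pd (idx [::]) (fun s => \sum_(p in L) u p s)) /U exchange_big /=; apply: eq_bigr => s _.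
by rewrite ffunE mulr_suml; apply: eq_bigr => p _; rewrite mulrC.
Qed.

Lemma le_sum_norm (I : finType) (G : I -> R) j : G j <= \sum_i `|G i|.
Proof.
rewrite (bigD1 j) //=; apply: le_trans (ler_norm _) _.
by rewrite lerDl; apply: sumr_ge0 => i _.
Qed.

Lemma main_Q ce : CE_for u [set: 'I_n] ce ->
  exists x, XQ x /\ pareto u L XQ [::] (x [::]).
Proof.
move=> hce.
have xc : XQ (fun _ => ce).
  split=> [pi _|pi _ _ p _ _]; last exact: lexx.
  case: hce => hd hc; split => // p _; exact: hc.
have hf : exists v, feas v by exists (enc (fun _ => ce)); apply: E2.
have hb : exists M, forall v, feas v -> \sum_x fobj x * v x <= M.
  exists (\sum_s `|\sum_(p in L) u p s|) => v hv.
  rewrite obj_fam.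
  have [hin _] := E1 _ hv.
  have [[h0' h1'] _] := hin [::] isT.
  have -> : \sum_(p in L) U u p (fam v [::]) = \sum_s fam v [::] s * \sum_(p in L) u p s.
    rewrite /U exchange_big /=; apply: eq_bigr => s _; rewrite mulr_sumr //.
  apply: (@le_trans _ _ (\sum_s fam v [::] s * \sum_s0 `|\sum_(p in L) u p s0|)).
    apply: ler_sum => s _; apply: ler_wpM2l => //.
    exact: (le_sum_norm _ (fun s => \sum_(p in L) u p s) s).
  by rewrite -mulr_suml h1' mul1r.
have [vs [hvs opt]] := @lp_max R V K cc dd fobj hf hb.
exists (fam vs); split; first exact: E1.
split; first by exists (fam vs); split => //; apply: E1.
move=> x' hx' [hle [p [hpL _ hlt]]].
have := opt _ (E2 _ hx'); rewrite !obj_fam fam_enc ?nil_mem //.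
rewrite (bigD1 p) //= [X in _ <= X](bigD1 p) //= => hsum.
have : \sum_(q in L | q != p) U u q (fam vs [::]) <= \sum_(q in L | q != p) U u q (x' [::]).
  by apply: ler_sum => q /andP[hq _]; apply: hle.
move: hsum hlt; lra.
Qed.

End Enc.

Lemma pareto_ext (R : realFieldType) (n : nat) (S : 'I_n -> finType)
  (u : 'I_n -> profile S -> R) (L : {set 'I_n}) (P1 P2 : Defs.family R S -> Prop) pi y :
  (forall x, P1 x <-> P2 x) -> pareto u L P1 pi y -> pareto u L P2 pi y.
Proof.
move=> h [[x' [h1 h2]] h3]; split; first by exists x'; split => //; apply/h.
by move=> z hz; apply: h3; apply/h.
Qed.

Theorem theorem1 (R : realFieldType) (n : nat) (S : 'I_n -> finType)
  (hS : forall p, (0 < #|S p|)%N)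
  (u : 'I_n -> profile S -> R) (L F : {set 'I_n})
  (hLF : L :|: F = [set: 'I_n]) (hLF' : L :&: F = set0) :
  (exists x, SCE u L F x) /\ (exists x, SCE_PA u L F x).
Proof.
have [ce hce] := @ce_exists R n S hS u.
split.
  have [x [hx hp]] := @main_Q R n S u L F (fun pi => pi == [::]) ce hce.
  have eqv : forall y, XQ R n S u L F (fun pi => pi == [::]) y <-> XS u L F y.
    move=> y; split => [[h1 h2]|[h1 h2]]; first by split => //; apply: h2.
    by split => // pi _ /eqP ->.
  exists x; split; first exact/eqv.
  exact: pareto_ext hp.
have [x [hx hp]] := @main_Q R n S u L F predT ce hce.
have eqv : forall y, XQ R n S u L F predT y <-> XPS u L F y.
  move=> y; split => [[h1 h2]|[h1 h2]]; first by split => // pi hpi; apply: h2.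
  by split => // pi hpi _; apply: h2.
exists x; split; first exact/eqv.
exact: pareto_ext hp.
Qed.
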